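(* Let $A\in\mathbb{R}^{m\times n}$, $b\in\mathcal{R}(A)$, and let $f:\mathbb{R}^n\to\mathbb{R}$ be $\alpha$-strongly convex. Let $\hat x$ be the unique solution of $\min_{x\in\mathbb{R}^n} f(x)$ subject to $Ax=b$, and assume that the subdifferential mapping $\partial f$ is calm at $\hat x$ and that the collection $\{\partial f(\hat x),\mathcal{R}(A^T)\}$ is linearly regular. Let $I_1,\dots,I_r$ be a (not necessarily disjoint) covering of $\{1,\dots,m\}$, let $A_i$ be the submatrix of rows of $A$ indexed by $I_i$ and $b_i$ the subvector of $b$ indexed by $I_i$, and assign each index $i\in\{1,\dots,r\}$ arbitrarily either to $I_C$ or to $I_Q$. Run the algorithm described in the context with $x_0^*\in\mathcal{R}(A^T)$, $x_0=\nabla f^*(x_0^* )$ and probabilities $p_i>0$. Then the iterates converge in expectation to $\hat x$ at a linear rate: there are constants $q\in(0,1)$ and $c>0$ such that for all $k$ \[ \mathbb{E}\left[D_f^{x_{k+1}^*}(x_{k+1},\hat x)\right] \le q\cdot \mathbb{E}\left[D_f^{x_k^*}(x_k,\hat x)\right] \quad\text{and}\quad \mathbb{E}\left[\|x_k-\hat x\|_2\right]\le c\cdot q^{k/2}. \]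
   Context: $f$ is $\alpha$-strongly convex ($\alpha>0$) if $f(y)\ge f(x)+\langle x^*,y-x\rangle+\frac{\alpha}{2}\|y-x\|_2^2$ for all $x,y$, $x^*\in\partial f(x)$; its conjugate $f^*(x^* )=\sup_x\langle x^*,x\rangle-f(x)$ is then differentiable with Lipschitz gradient. Bregman distance: $D_f^{x^*}(x,y)=f(y)-f(x)-\langle x^*,y-x\rangle$. $\mathcal{R}(\cdot)$ is the range. A set-valued map $S:\mathbb{R}^n\rightrightarrows\mathbb{R}^n$ is calm at $\hat x$ if $S(\hat x)\neq\emptyset$ and there are $\epsilon,L>0$ with $S(x)\subset S(\hat x)+L\|x-\hat x\|_2 B_1$ whenever $\|x-\hat x\|_2\le\epsilon$, where $B_1$ is the closed Euclidean unit ball. Two closed convex sets $D_1,D_2$ with nonempty intersection are linearly regular if there is $\gamma>0$ with $\operatorname{dist}(x,D_1\cap D_2)^2\le\gamma(\operatorname{dist}(x,D_1)^2+\operatorname{dist}(x,D_2)^2)$ for all $x\in\mathbb{R}^n$ (Euclidean distances). Algorithm: for $k=0,1,\dots$ choose $i_k\in\{1,\dots,r\}$ independently with $P(i_k=i)=p_i$ ($\sum p_i=1$); write $i=i_k$. If $i\in I_C$: let $\hat w$ be a minimizer of $w\mapsto f^*(x_k^*-A_i^Tw)+\langle w,b_i\rangle$ and set $x_{k+1}^*=x_k^*-A_i^T\hat w$, $x_{k+1}=\nabla f^*(x_{k+1}^* )$ (this $x_{k+1}$ is the Bregman projection of $x_k$ onto $\{x:A_ix=b_i\}$, i.e. the minimizer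 of $D_f^{x_k^*}(x_k,\cdot)$ over that set). If $i\in I_Q$ (with $Q_i=\{b_i\}$): set $w_k=A_ix_k-b_i$, $\beta_k=\langle A_i^Tw_k,x_k\rangle-\|w_k\|_2^2$, let $t_k$ minimize $t\mapsto f^*(x_k^*-tA_i^Tw_k)+t\beta_k$ over $t\in\mathbb{R}$, and set $x_{k+1}^*=x_k^*-t_kA_i^Tw_k$, $x_{k+1}=\nabla f^*(x_{k+1}^* )$ (the Bregman projection of $x_k$ onto the half-space $\{x:\langle A_i^Tw_k,x\rangle\le\beta_k\}$); if $w_k=0$ then $x_{k+1}=x_k$, $x_{k+1}^*=x_k^*$. Expectations are over the random indices. *)

(* Defs.v *)
From HB Require Import structures.
From mathcomp Require Import all_boot all_order all_algebra.
From mathcomp Require Import boolp classical_sets reals.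
Set Implicit Arguments. Unset Strict Implicit. Unset Printing Implicit Defensive.
Import Order.TTheory GRing.Theory Num.Theory.
Local Open Scope ring_scope.
Local Open Scope classical_set_scope.

Section Defs.
Variable R : realType.

Definition dotv n (u v : 'cV[R]_n) : R := \sum_(j < n) u j 0 * v j 0.
Definition norm2 n (u : 'cV[R]_n) : R := Num.sqrt (dotv u u).

Definition convex_fun n (f : 'cV[R]_n -> R) :=
  forall x y (t : R), 0 <= t <= 1 ->
    f (t *: x + (1 - t) *: y) <= t * f x + (1 - t) * f y.

Definition subdiff n (f : 'cV[R]_n -> R) (x : 'cV[R]_n) : set 'cV[R]_n :=
  [set xs | forall y, f y >= f x + dotv xs (y - x)].

Definition strongly_convex n (alpha : R) (f : 'cV[R]_n -> R) :=
  0 < alpha /\ convex_fun f /\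
  forall x y xs, subdiff f x xs ->
    f y >= f x + dotv xs (y - x) + alpha / 2 * norm2 (y - x) ^+ 2.

Definition conj_fun n (f : 'cV[R]_n -> R) (xs : 'cV[R]_n) : R :=
  sup [set r | exists x, r = dotv xs x - f x].

Definition has_grad n (F : 'cV[R]_n -> R) (y g : 'cV[R]_n) :=
  forall eps : R, 0 < eps -> exists delta : R, 0 < delta /\
    forall h, norm2 h < delta ->
      `|F (y + h) - F y - dotv g h| <= eps * norm2 h.

Definition bregman n (f : 'cV[R]_n -> R) (xs x y : 'cV[R]_n) : R :=
  f y - f x - dotv xs (y - x).

Definition calm n (S : 'cV[R]_n -> set 'cV[R]_n) (xh : 'cV[R]_n) :=
  S xh !=set0 /\ exists eps L : R, 0 < eps /\ 0 < L /\
    forall x, norm2 (x - xh) <= eps ->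
      forall y, S x y -> exists z u, S xh z /\ norm2 u <= 1 /\
        y = z + (L * norm2 (x - xh)) *: u.

Definition dist_set n (x : 'cV[R]_n) (D : set 'cV[R]_n) : R :=
  inf [set r | exists y, D y /\ r = norm2 (x - y)].

Definition lin_regular n (D1 D2 : set 'cV[R]_n) :=
  (D1 `&` D2) !=set0 /\ exists gamma : R, 0 < gamma /\
    forall x, dist_set x (D1 `&` D2) ^+ 2 <=
              gamma * (dist_set x D1 ^+ 2 + dist_set x D2 ^+ 2).

Definition mrange m n (M : 'M[R]_(m, n)) : set 'cV[R]_m :=
  [set y | exists x, y = M *m x].

Definition subrows m n (A : 'M[R]_(m, n)) (I : {set 'I_m}) : 'M[R]_(#|I|, n) :=
  \matrix_(k < #|I|, l < n) A (enum_val k) l.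
Definition subvec m (b : 'cV[R]_m) (I : {set 'I_m}) : 'cV[R]_#|I| :=
  \col_(k < #|I|) b (enum_val k) 0.

Definition is_argmin (T : Type) (F : T -> R) (t : T) := forall t', F t <= F t'.

Definition alg_step m n r (f : 'cV[R]_n -> R) (A : 'M[R]_(m, n)) (b : 'cV[R]_m)
  (I : 'I_r -> {set 'I_m}) (inC : 'I_r -> bool) (i : 'I_r)
  (xs x xs' : 'cV[R]_n) : Prop :=
  let Ai := subrows A (I i) in
  let bi := subvec b (I i) in
  if inC i then
    exists wh : 'cV[R]_#|I i|,
      is_argmin (fun w => conj_fun f (xs - Ai^T *m w) + dotv w bi) wh /\
      xs' = xs - Ai^T *m wh
  else
    let w := Ai *m x - bi in
    let beta := dotv (Ai^T *m w) x - norm2 w ^+ 2 in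
    if w == 0 then xs' = xs else
    exists t : R,
      is_argmin (fun t' => conj_fun f (xs - t' *: (Ai^T *m w)) + t' * beta) t /\
      xs' = xs - t *: (Ai^T *m w).

(* Expectation of g(iterate) after k steps: the iterate depends only on the
   first k (i.i.d.) indices. *)
Definition expect r (p : 'I_r -> R) (k : nat) (g : seq 'I_r -> R) : R :=
  \sum_(s : k.-tuple 'I_r) (\prod_(i <- s) p i) * g s.

End Defs.

(* Main.v *)
Require Import Defs.
From HB Require Import structures.
From mathcomp Require Import all_boot all_order all_algebra.
From mathcomp Require Import boolp classical_sets reals.
From mathcomp Require Import ring lra.
Import Order.TTheory GRing.Theory Num.Theory.
Local Open Scope ring_scope.
Local Open Scope classical_set_scope.


Section Vec.
Context {R : realType}.
Context {n : nat}.
Implicit Types u v w : 'cV[R]_n.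

Lemma dotvE u v : dotv u v = (u^T *m v) 0 0.
Proof. by rewrite /dotv !mxE; apply: eq_bigr => j _; rewrite mxE. Qed.

Lemma dotvC u v : dotv u v = dotv v u.
Proof. by rewrite /dotv; apply: eq_bigr => j _; rewrite mulrC. Qed.

Lemma dotvDl u v w : dotv (u + v) w = dotv u w + dotv v w.
Proof. by rewrite !dotvE linearD /= mulmxDl mxE. Qed.

Lemma dotvDr u v w : dotv w (u + v) = dotv w u + dotv w v.
Proof. by rewrite !dotvE mulmxDr mxE. Qed.

Lemma dotvZl a u v : dotv (a *: u) v = a * dotv u v.
Proof. by rewrite !dotvE linearZ /= -scalemxAl mxE. Qed.

Lemma dotvZr a u v : dotv u (a *: v) = a * dotv u v.
Proof. by rewrite !dotvE -scalemxAr mxE. Qed.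

Lemma dotvNl u v : dotv (- u) v = - dotv u v.
Proof. by rewrite -scaleN1r dotvZl mulN1r. Qed.

Lemma dotvNr u v : dotv u (- v) = - dotv u v.
Proof. by rewrite -scaleN1r dotvZr mulN1r. Qed.

Lemma dotvBl u v w : dotv (u - v) w = dotv u w - dotv v w.
Proof. by rewrite dotvDl dotvNl. Qed.

Lemma dotvBr u v w : dotv w (u - v) = dotv w u - dotv w v.
Proof. by rewrite dotvDr dotvNr. Qed.

Lemma dotv0l v : dotv 0 v = 0.
Proof. by rewrite /dotv big1 // => j _; rewrite mxE mul0r. Qed.

Lemma dotv0r v : dotv v 0 = 0.
Proof. by rewrite dotvC dotv0l. Qed.

Lemma dotv_ge0 u : 0 <= dotv u u.
Proof. by rewrite /dotv sumr_ge0 // => j _; rewrite -expr2 sqr_ge0. Qed.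

Lemma dotv_eq0 u : dotv u u = 0 -> u = 0.
Proof.
move=> /eqP; rewrite /dotv psumr_eq0 => [/allP H|j _]; last by rewrite -expr2 sqr_ge0.
apply/matrixP => i j; rewrite (ord1 j) mxE.
have /H : i \in index_enum 'I_n by rewrite mem_index_enum.
by rewrite /= -expr2 sqrf_eq0 => /eqP.
Qed.

Lemma norm2_ge0 u : 0 <= norm2 u.
Proof. exact: sqrtr_ge0. Qed.

Lemma norm2_sq u : norm2 u ^+ 2 = dotv u u.
Proof. by rewrite /norm2 sqr_sqrtr // dotv_ge0. Qed.

Lemma norm2_0 : norm2 (0 : 'cV[R]_n) = 0.
Proof. by rewrite /norm2 dotv0l sqrtr0. Qed.

Lemma CS u v : dotv u v <= norm2 u * norm2 v.
Proof.
have [v0|vpos] := eqVneq (norm2 v) 0.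
  have : dotv v v = 0 by rewrite -norm2_sq; move: v0; rewrite /norm2 => ->; rewrite expr0n.
  by move/dotv_eq0 => ->; rewrite dotv0r norm2_0 mulr0.
have vp : 0 < norm2 v by rewrite lt_def vpos norm2_ge0.
set a := norm2 u; set c := norm2 v; set d := dotv u v.
have H := dotv_ge0 (c^+2 *: u - d *: v).
rewrite dotvBl !dotvBr !dotvZl !dotvZr -!norm2_sq -/a -/c (dotvC v u) -/d in H.
have H2 : 0 <= c^+2 * (c^+2 * a^+2 - d^+2) by lra.
have H3 : d^+2 <= (a * c)^+2.
  move: H2; rewrite pmulr_rge0 ?exprn_gt0 //; lra.
have ha : 0 <= a := norm2_ge0 u.
have hac : 0 <= a * c by apply: mulr_ge0 => //; exact: ltW.
nra.
Qed.

End Vec.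

Lemma dotv_mulmx (R : realType) m n (M : 'M[R]_(m, n)) (u : 'cV[R]_n) (y : 'cV[R]_m) :
  dotv (M *m u) y = dotv u (M^T *m y).
Proof. by rewrite !dotvE trmx_mul mulmxA. Qed.


Section Fro.
Context {R : realType}.

Lemma CS_sq n (u v : 'cV[R]_n) : dotv u v ^+ 2 <= dotv u u * dotv v v.
Proof.
have h1 := CS u v; have h2 := CS (- u) v.
rewrite dotvNl in h2.
have hN : norm2 (- u) = norm2 u by rewrite /norm2 dotvNl dotvNr opprK.
rewrite hN in h2.
rewrite -!norm2_sq.
have := norm2_ge0 u; have := norm2_ge0 v.
nra.
Qed.

Definition fro2 {m n} (M : 'M[R]_(m, n)) : R := \sum_i \sum_j M i j ^+ 2.

Lemma fro2_ge0 m n (M : 'M[R]_(m, n)) : 0 <= fro2 M.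
Proof. by apply: sumr_ge0 => i _; apply: sumr_ge0 => j _; apply: sqr_ge0. Qed.

Lemma fro2_tr m n (M : 'M[R]_(m, n)) : fro2 M^T = fro2 M.
Proof. by rewrite /fro2 exchange_big; apply: eq_bigr => i _; apply: eq_bigr => j _; rewrite mxE. Qed.

Lemma norm2_mulmx_sq m n (M : 'M[R]_(m, n)) (v : 'cV[R]_n) :
  norm2 (M *m v) ^+ 2 <= fro2 M * norm2 v ^+ 2.
Proof.
rewrite !norm2_sq {1}/dotv /fro2 mulr_suml; apply: ler_sum => i _.
have -> : (M *m v) i 0 = dotv (row i M)^T v.
  by rewrite /dotv mxE; apply: eq_bigr => j _; rewrite !mxE.
rewrite -expr2; apply: le_trans; first exact: CS_sq.
apply: ler_wpM2r; first exact: dotv_ge0.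
by rewrite /dotv; apply: ler_sum => j _; rewrite !mxE expr2.
Qed.

End Fro.
Arguments norm2_mulmx_sq {R m n}.
Arguments fro2_ge0 {R m n}.
Arguments fro2_tr {R m n}.
Arguments CS_sq {R n}.


Section Sel.
Context {R : realType}.

Definition sel {m} (J : {set 'I_m}) : 'M[R]_(#|J|, m) :=
  \matrix_(k < #|J|, j < m) ((enum_val k == j)%:R).

Lemma sel_mul m p (J : {set 'I_m}) (M : 'M[R]_(m, p)) k l :
  (sel J *m M) k l = M (enum_val k) l.
Proof.
rewrite mxE (bigD1 (enum_val k)) //= big1 ?addr0.
  by rewrite mxE eqxx mul1r.
by move=> j /negPf hj; rewrite mxE eq_sym hj mul0r.
Qed.

Lemma subrowsE m n (A : 'M[R]_(m, n)) J : subrows A J = sel J *m A.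
Proof. by apply/matrixP => k l; rewrite sel_mul mxE. Qed.

Lemma subvecE m (b : 'cV[R]_m) J : subvec b J = sel J *m b.
Proof. by apply/matrixP => k l; rewrite sel_mul mxE (ord1 l). Qed.

Lemma dotv_sel m J (v : 'cV[R]_m) :
  dotv (sel J *m v) (sel J *m v) = \sum_(j in J) v j 0 ^+ 2.
Proof.
rewrite (big_enum_val (fun j => v j 0 ^+ 2)) /dotv.
by apply: eq_bigr => k _; rewrite sel_mul expr2.
Qed.

Lemma cover_ineq m r (I : 'I_r -> {set 'I_m}) (v : 'cV[R]_m) :
  (forall j : 'I_m, exists i : 'I_r, j \in I i) ->
  dotv v v <= \sum_i dotv (sel (I i) *m v) (sel (I i) *m v).
Proof.
move=> cov.
under eq_bigr => i _ do rewrite dotv_sel big_mkcond /=.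
rewrite exchange_big /dotv; apply: ler_sum => j _.
have [i0 hi0] := cov j.
rewrite (bigD1 i0) //= hi0 -expr2 lerDl.
by apply: sumr_ge0 => i _; case: ifP => _ //; apply: sqr_ge0.
Qed.

End Sel.


Section Expect.
Context {R : realType} {r : nat} (p : 'I_r -> R).

Lemma expect_succ k (g : seq 'I_r -> R) :
  expect p k.+1 g = expect p k (fun s => \sum_i p i * g (rcons s i)).
Proof.
rewrite /expect.
pose h := fun (si : k.-tuple 'I_r * 'I_r) => [tuple of rcons si.1 si.2].
have hinj : injective h.
  by move=> [s i] [s' i'] /(congr1 val) /= /rcons_inj [/val_inj -> ->].
have hbij : bijective h.
  apply: inj_card_bij hinj _.
  by rewrite card_prod !card_tuple card_ord expnSr.
rewrite (reindex h) /=; last by apply: onW_bij.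
under [RHS]eq_bigr => s _ do rewrite mulr_sumr.
rewrite pair_big /=; apply: eq_bigr => [[s i]] _ /=.
by rewrite big_rcons /= mulrA.
Qed.

Lemma expect0 (g : seq 'I_r -> R) : expect p 0 g = g [::].
Proof.
rewrite /expect (big_pred1 [tuple]) => [|t]; last by apply/esym/eqP; apply: tuple0.
by rewrite big_nil mul1r.
Qed.

Hypothesis p_ge0 : forall i, 0 <= p i.
Hypothesis p_sum : \sum_i p i = 1.

Lemma expect_le k (g1 g2 : seq 'I_r -> R) :
  (forall s, g1 s <= g2 s) -> expect p k g1 <= expect p k g2.
Proof.
move=> H; apply: ler_sum => s _; apply: ler_wpM2l => //.
by apply: prodr_ge0.
Qed.

Lemma expect_lin k a c (g : seq 'I_r -> R) :
  expect p k (fun s => a * g s + c) = a * expect p k g + c.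
Proof.
elim: k a c g => [|k IH] a c g; first by rewrite !expect0.
rewrite !expect_succ.
have -> : (fun s => \sum_i p i * (a * g (rcons s i) + c)) =
          (fun s => a * (\sum_i p i * g (rcons s i)) + c).
  apply: funext => s; rewrite mulr_sumr -[c in RHS]mul1r -p_sum mulr_suml -big_split /=.
  by apply: eq_bigr => i _; ring.
by rewrite IH.
Qed.

End Expect.


Section Convex.
Context {R : realType} {n : nat} (f : 'cV[R]_n -> R).
Hypothesis fconv : convex_fun f.

Lemma jensen (I : eqType) (s : seq I) (lam : I -> R) (d : I -> 'cV[R]_n) x :
  (forall k, 0 <= lam k) -> \sum_(k <- s) lam k <= 1 ->
  f (x + \sum_(k <- s) lam k *: d k) <=
  f x + \sum_(k <- s) lam k * (f (x + d k) - f x).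
Proof.
elim: s lam => [|a s IH] lam lam0 hs.
  by rewrite !big_nil !addr0.
rewrite !big_cons in hs *.
set la := lam a in hs *.
set L := \sum_(k <- s) lam k in hs.
have L0 : 0 <= L by apply: sumr_ge0 => k _.
have la0 : 0 <= la := lam0 a.
have [la1|la1] := eqVneq la 1.
  have L00 : L = 0 by lra.
  have : all (fun k => lam k == 0) s.
    have := L00; move/eqP; rewrite /L psumr_eq0 //.
  move=> /allP hall.
  rewrite big_seq big1 ?addr0; last by move=> k /hall /= /eqP ->; rewrite scale0r.
  rewrite big_seq big1 ?addr0; last by move=> k /hall /= /eqP ->; rewrite mul0r.
  by rewrite la1 scale1r mul1r; lra.
have la1' : 0 < 1 - la by rewrite subr_gt0 lt_def eq_sym la1 /=; lra.
set S := \sum_(k <- s) lam k *: d k.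
pose lam' := fun k => lam k / (1 - la).
have lam'0 : forall k, 0 <= lam' k.
  by move=> k; apply: divr_ge0 => //; apply: ltW.
have hs' : \sum_(k <- s) lam' k <= 1.
  by rewrite /lam' -mulr_suml ler_pdivrMr // mul1r -/L; lra.
have IH' := IH lam' lam'0 hs'.
have eS : \sum_(k <- s) lam' k *: d k = (1 - la)^-1 *: S.
  rewrite /S scaler_sumr; apply: eq_bigr => k _.
  by rewrite scalerA /lam' mulrC.
rewrite eS in IH'.
have ex : x + (la *: d a + S) =
  la *: (x + d a) + (1 - la) *: (x + (1 - la)^-1 *: S).
  rewrite !scalerDr scalerA mulfV ?scale1r; last by rewrite lt0r_neq0.
  rewrite scalerBl scale1r.
  rewrite -!addrA [in RHS](addrCA (la *: d a)) [in RHS](addrCA (la *: x)).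
  by rewrite [la *: x + _]addrCA addNKr.
rewrite ex.
apply: le_trans; first by apply: fconv; lra.
have eR : \sum_(k <- s) lam' k * (f (x + d k) - f x) =
   (1 - la)^-1 * \sum_(k <- s) lam k * (f (x + d k) - f x).
  rewrite mulr_sumr; apply: eq_bigr => k _; rewrite /lam'; field.
  by rewrite lt0r_neq0.
rewrite eR in IH'.
set T := \sum_(k <- s) lam k * (f (x + d k) - f x) in IH' *.
have : (1 - la) * f (x + (1 - la)^-1 *: S) <= (1 - la) * (f x + (1 - la)^-1 * T).
  by rewrite ler_pM2l.
rewrite mulrDr mulrA mulfV ?mul1r; last by rewrite lt0r_neq0.
lra.
Qed.

End Convex.

Section Convex2.
Context {R : realType} {n : nat} (f : 'cV[R]_n -> R).
Hypothesis fconv : convex_fun f.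

Definition ee (j : 'I_n) : 'cV[R]_n := delta_mx j 0.

Definition Kb x := \sum_j (`|f (x + ee j) - f x| + `|f (x - ee j) - f x|).

Definition l1 (v : 'cV[R]_n) := \sum_j `|v j 0|.

Lemma l1_ge0 v : 0 <= l1 v.
Proof. by apply: sumr_ge0 => j _. Qed.

Lemma Kb_ge0 x : 0 <= Kb x.
Proof. by apply: sumr_ge0 => j _; apply: addr_ge0. Qed.

Lemma f_ub x v : l1 v <= 1 -> f (x + v) <= f x + l1 v * Kb x.
Proof.
move=> hv.
pose d := fun j : 'I_n => if 0 <= v j 0 then ee j else - ee j.
have ev : v = \sum_(j <- index_enum 'I_n) `|v j 0| *: d j.
  rewrite {1}(matrix_sum_delta v); apply: eq_bigr => j _.
  rewrite big_ord1 /d /ee; case: ifP => h.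
    by rewrite ger0_norm.
  by rewrite ltr0_norm ?scaleNr ?scalerN ?opprK //; rewrite ltNge h.
rewrite [in f (x + v)]ev.
apply: le_trans; first by apply: jensen => //.
rewrite lerD2l /l1 mulr_suml; apply: ler_sum => j _.
apply: ler_wpM2l => //.
apply: le_trans; first exact: ler_norm.
rewrite /Kb (bigD1 j) //= /d; case: ifP => _.
  by rewrite -addrA lerDl addr_ge0 // sumr_ge0 // => i _; rewrite addr_ge0.
by rewrite (addrC `|_|) -addrA lerDl addr_ge0 // sumr_ge0 // => i _; rewrite addr_ge0.
Qed.

End Convex2.

Lemma coord_le {R : realType} {n : nat} (u : 'cV[R]_n) j : `|u j 0| <= norm2 u.
Proof.
rewrite -[`|u j 0|]sqrtr_sqr /norm2 ler_sqrt ?dotv_ge0 //.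
rewrite /dotv (bigD1 j) //= -expr2 lerDl sumr_ge0 // => i _; rewrite -expr2 sqr_ge0.
by [].
Qed.

Lemma l1_le {R : realType} {n : nat} (u : 'cV[R]_n) : l1 u <= n%:R * norm2 u.
Proof.
have -> : n%:R * norm2 u = \sum_(j < n) norm2 u by rewrite sumr_const card_ord mulr_natl.
rewrite /l1; apply: ler_sum => j _.
exact: coord_le.
Qed.

Section Convex3.
Context {R : realType} {n : nat} (f : 'cV[R]_n -> R).
Hypothesis fconv : convex_fun f.

Lemma f_lsc x eta : 0 < eta -> exists rho, 0 < rho /\
  forall y, norm2 (y - x) < rho -> f x - eta <= f y.
Proof.
move=> eta0.
set K := Kb f x; have K0 : 0 <= K := Kb_ge0 f x.
set c := (n%:R + 1) * (K + 1).
have c0 : 0 < c by apply: mulr_gt0; [rewrite ltr_wpDl|rewrite ltr_wpDl].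
set mn := Num.min 1 eta.
have mn0 : 0 < mn by rewrite lt_min ltr01 eta0.
have mn1 : mn <= 1 by rewrite ge_min lexx.
have mne : mn <= eta by rewrite ge_min lexx orbT.
exists (mn / c); split; first by apply: divr_gt0.
move=> y hy.
have rc : mn / c * c = mn by rewrite mulfVK // lt0r_neq0.
set rho := mn / c in hy rc.
set u := x - y.
have hu : norm2 u = norm2 (y - x).
  by rewrite /u /norm2 -opprB dotvNl dotvNr opprK.
have n0 : 0 <= n%:R :> R by [].
have hl := l1_le u; rewrite hu in hl.
have hn2 := norm2_ge0 (y - x).
have hl1 : l1 u <= 1.
  apply: (le_trans hl); rewrite /c in rc.
  have : n%:R * norm2 (y - x) <= n%:R * rho by apply: ler_wpM2l => //; apply: ltW.
  nra.
have hlK : l1 u * K <= eta.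
  have : l1 u * K <= n%:R * rho * K.
    apply: ler_wpM2r => //; apply: (le_trans hl).
    by apply: ler_wpM2l => //; apply: ltW.
  rewrite /c in rc; nra.
have hub := @f_ub R n f fconv x u hl1.
have exx : (2^-1 : R) *: y + (1 - 2^-1) *: (x + u) = x.
  by apply/matrixP => i j; rewrite /u !mxE; field.
have hc := fconv y (x + u) (2^-1).
rewrite exx in hc.
have : f x <= 2^-1 * f y + (1 - 2^-1) * f (x + u) by apply: hc; lra.
rewrite -/K in hub.
lra.
Qed.

End Convex3.


Lemma norm2Z {R : realType} {n : nat} (a : R) (v : 'cV[R]_n) :
  norm2 (a *: v) = `|a| * norm2 v.
Proof.
by rewrite /norm2 dotvZl dotvZr mulrA -expr2 sqrtrM ?sqr_ge0 // sqrtr_sqr.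
Qed.

Lemma norm2N {R : realType} {n : nat} (v : 'cV[R]_n) : norm2 (- v) = norm2 v.
Proof. by rewrite /norm2 dotvNl dotvNr opprK. Qed.

Section Conj.
Context {R : realType} {n : nat} (f : 'cV[R]_n -> R) (alpha : R).
Hypothesis hsc : strongly_convex alpha f.
Variables (x0 z0 : 'cV[R]_n).
Hypothesis hz0 : subdiff f x0 z0.

Let a0 : 0 < alpha. Proof. by case: hsc. Qed.
Let fconv : convex_fun f. Proof. by case: hsc => _ []. Qed.

Lemma conj_bound xs y : dotv xs y - f y <=
  dotv xs x0 - f x0 + dotv (xs - z0) (xs - z0) / (2 * alpha).
Proof.
have [_ [_ H]] := hsc.
have := H x0 y z0 hz0; rewrite norm2_sq.
set u := y - x0; set a := xs - z0.
have ey : y = x0 + u by rewrite /u addrC subrK.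
rewrite [in dotv xs y]ey dotvDr.
have e1 : dotv xs u = dotv a u + dotv z0 u by rewrite /a dotvBl subrK.
rewrite e1 => hf.
clearbody a u.
have Hq := dotv_ge0 (a - alpha *: u).
rewrite dotvBl !dotvBr !dotvZl !dotvZr ?(dotvC u a) in Hq.
have : dotv a u - alpha / 2 * dotv u u <= dotv a a / (2 * alpha).
  rewrite ler_pdivlMr ?mulr_gt0 //.
  have -> : (dotv a u - alpha / 2 * dotv u u) * (2 * alpha) =
            2 * alpha * dotv a u - alpha * (alpha * dotv u u) by field.
  lra.
lra.
Qed.

Definition conjset xs := [set r | exists x, r = dotv xs x - f x].

Lemma conj_has_sup xs : has_sup (conjset xs).
Proof.
split; first by exists (dotv xs 0 - f 0); exists 0.
exists (dotv xs x0 - f x0 + dotv (xs - z0) (xs - z0) / (2 * alpha)).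
by move=> r [y ->]; apply: conj_bound.
Qed.

Lemma conj_ge xs y : dotv xs y - f y <= conj_fun f xs.
Proof.
by apply: (sup_upper_bound (conj_has_sup xs)); exists y.
Qed.

Lemma fenchel_le xs x : has_grad (conj_fun f) xs x ->
  f x <= dotv xs x - conj_fun f xs.
Proof.
move=> hg.
set Fc := conj_fun f xs.
apply/ler_addgt0Pr => e e0.
set eta := e / 3.
have eta0 : 0 < eta by apply: divr_gt0.
have [rho1 [rho10 hlsc]] := @f_lsc _ _ f fconv x _ eta0.
set nx := norm2 xs.
have nx0 : 0 <= nx := norm2_ge0 xs.
set rho := Num.min rho1 (eta / (nx + 1)).
have nx1 : 0 < nx + 1 by rewrite ltr_wpDl.
have rho0 : 0 < rho by rewrite lt_min rho10 divr_gt0.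
have rho_le1 : rho <= rho1 by rewrite ge_min lexx.
have rho_le2 : rho * (nx + 1) <= eta.
  by rewrite -ler_pdivlMr // ge_min lexx orbT.
have [del [del0 hdel]] := hg (rho / 2) (divr_gt0 rho0 (ltr0Sn _ 1)).
set theta := Num.min eta (del * rho ^+ 2 / (4 * (rho + 1))).
have rho1' : 0 < 4 * (rho + 1) by rewrite mulr_gt0 // ltr_wpDl // ltW.
have theta0 : 0 < theta.
  by rewrite lt_min eta0 /= divr_gt0 // mulr_gt0 // exprn_gt0.
have th1 : theta <= eta by rewrite ge_min lexx.
have th2 : theta * (4 * (rho + 1)) <= del * rho ^+ 2.
  by rewrite -ler_pdivlMr // ge_min lexx orbT.
have [r' [y ->] hy] := sup_adherent theta0 (conj_has_sup xs).
rewrite -/(conj_fun f xs) -/Fc in hy.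
set D := norm2 (y - x).
have D0 : 0 <= D := norm2_ge0 _.
have hD : D < rho.
  rewrite ltNge; apply/negP => hrD.
  set s := del / (2 * (D + 1)).
  have D1 : 0 < 2 * (D + 1) by rewrite mulr_gt0 // ltr_wpDl.
  have s0 : 0 < s by rewrite divr_gt0.
  have es : s * (2 * (D + 1)) = del by rewrite mulfVK // lt0r_neq0.
  set h := s *: (y - x).
  have nh : norm2 h = s * D by rewrite norm2Z ger0_norm // ltW.
  have nhd : norm2 h < del.
    rewrite nh; have : 0 < s * D + 2 * s by nra.
    nra.
  have := hdel h nhd.
  move/(le_trans (ler_norm _)) => H1.
  have H2 := conj_ge (xs + h) y.
  rewrite dotvDl in H2.
  have H3 : dotv h y - dotv x h = s * D ^+ 2.
    by rewrite (dotvC h y) -dotvBl /h dotvZr /D norm2_sq.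
  have H4 : s * D ^+ 2 < theta + rho / 2 * (s * D).
    rewrite -nh; move: hy; rewrite /Fc; lra.
  have H5 : 0 <= s * D * (D - rho).
    by apply: mulr_ge0; [apply: mulr_ge0 => //; apply: ltW|rewrite subr_ge0].
  have H6 : s * D ^+ 2 < 2 * theta by nra.
  have H7 : s * D ^+ 2 * (4 * (rho + 1)) < 2 * del * rho ^+ 2.
    have : s * D ^+ 2 * (4 * (rho + 1)) < 2 * theta * (4 * (rho + 1)).
      by rewrite ltr_pM2r.
    lra.
  have H8 : (D - rho) * (D * rho + D + rho) >= 0.
    apply: mulr_ge0; first by rewrite subr_ge0.
    have := ltW rho0; nra.
  have H9 : 2 * del * rho ^+ 2 * (D + 1) <= 2 * del * D ^+ 2 * (rho + 1).
    have : 0 <= 2 * del * ((D - rho) * (D * rho + D + rho)).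
      by apply: mulr_ge0 => //; apply: mulr_ge0 => //; apply: ltW.
    have E : 2 * del * D ^+ 2 * (rho + 1) - 2 * del * rho ^+ 2 * (D + 1) =
              2 * del * ((D - rho) * (D * rho + D + rho)) by ring.
    lra.
  have H10 : s * D ^+ 2 * (4 * (rho + 1)) * (D + 1) = 2 * del * D ^+ 2 * (rho + 1).
    by rewrite -es; ring.
  have : s * D ^+ 2 * (4 * (rho + 1)) * (D + 1) < 2 * del * rho ^+ 2 * (D + 1).
    by rewrite ltr_pM2r // ltr_wpDl.
  lra.
have hf := hlsc y (lt_le_trans hD rho_le1).
have hcs : dotv xs (y - x) <= nx * D := CS _ _.
have : nx * D <= eta.
  have : nx * D <= nx * rho by apply: ler_wpM2l => //; apply: ltW.
  nra.
rewrite dotvBr in hcs.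
rewrite /eta in hf th1 *.
lra.
Qed.

End Conj.

Section Conj2.
Context {R : realType} {n : nat} (f : 'cV[R]_n -> R) (alpha : R).
Hypothesis hsc : strongly_convex alpha f.
Variables (x0 z0 : 'cV[R]_n).
Hypothesis hz0 : subdiff f x0 z0.

Lemma fenchel_eq xs x : has_grad (conj_fun f) xs x ->
  conj_fun f xs = dotv xs x - f x.
Proof.
move=> hg; apply/eqP; rewrite eq_le; apply/andP; split.
  have := @fenchel_le _ _ f alpha hsc x0 z0 hz0 _ _ hg; lra.
exact: (@conj_ge _ _ f alpha hsc x0 z0 hz0).
Qed.

Lemma grad_subdiff xs x : has_grad (conj_fun f) xs x -> subdiff f x xs.
Proof.
move=> hg y; have := @conj_ge _ _ f alpha hsc x0 z0 hz0 xs y; rewrite (fenchel_eq _ _ hg) dotvBr; lra.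
Qed.

End Conj2.

Lemma breg_ge {R : realType} {n : nat} (f : 'cV[R]_n -> R) alpha x xs y :
  strongly_convex alpha f -> subdiff f x xs ->
  alpha / 2 * norm2 (y - x) ^+ 2 <= bregman f xs x y.
Proof. by move=> [_ [_ H]] /(H x y xs); rewrite /bregman; lra. Qed.

Section Opt.
Context {R : realType} {n : nat} (F : 'cV[R]_n -> R).

Lemma opt_aux y g d beta : has_grad F y g ->
  (forall t, F y <= F (y + t *: d) + t * beta) -> dotv g d + beta <= 0.
Proof.
move=> hg hmin; apply/ler_addgt0Pr => e e0; rewrite add0r.
set nd := norm2 d; have nd0 : 0 <= nd := norm2_ge0 d.
have nd1 : 0 < nd + 1 by rewrite ltr_wpDl.
set eps := e / (nd + 1).
have eps0 : 0 < eps by rewrite divr_gt0.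
have [del [del0 hdel]] := hg eps eps0.
set t := del / (2 * (nd + 1)).
have t0 : 0 < t by rewrite divr_gt0 // mulr_gt0.
have et : t * (2 * (nd + 1)) = del by rewrite mulfVK // lt0r_neq0 // mulr_gt0.
have ee : eps * (nd + 1) = e by rewrite mulfVK // lt0r_neq0.
have nh : norm2 ((- t) *: d) = t * nd by rewrite norm2Z normrN ger0_norm // ltW.
have nhd : norm2 ((- t) *: d) < del by rewrite nh; nra.
have H1 := le_trans (ler_norm _) (hdel _ nhd).
rewrite nh dotvZr in H1.
have H2 := hmin (- t).
have H3 : 0 <= t * (eps * nd - (dotv g d + beta)) by lra.
rewrite pmulr_rge0 // in H3.
have : eps * nd <= e by rewrite -ee ler_pM2l // lerDl.
lra.
Qed.

Lemma grad_opt y g d beta : has_grad F y g ->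
  (forall t, F y <= F (y + t *: d) + t * beta) -> dotv g d + beta = 0.
Proof.
move=> hg hmin; apply/eqP; rewrite eq_le (opt_aux _ _ _ _ hg hmin) /=.
have : dotv g (- d) + - beta <= 0.
  apply: (opt_aux _ _ _ _ hg) => t; have := hmin (- t).
  by rewrite scaleNr -scalerN mulNr -mulrN.
by rewrite dotvNr; lra.
Qed.

End Opt.


Lemma breg_diff {R : realType} {n : nat} (f : 'cV[R]_n -> R) xs x xs' x' xh :
  bregman f xs x xh - bregman f xs' x' xh =
  bregman f xs x x' + dotv (xs' - xs) (xh - x').
Proof. rewrite /bregman !dotvBl !dotvBr; lra. Qed.

Section Step.
Context {R : realType} {m n r : nat} (A : 'M[R]_(m, n)) (b : 'cV[R]_m)
  (alpha : R) (f : 'cV[R]_n -> R) (xhat : 'cV[R]_n)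
  (I : 'I_r -> {set 'I_m}) (inC : 'I_r -> bool).
Hypothesis hsc : strongly_convex alpha f.
Hypothesis hAx : A *m xhat = b.
Variable z0 : 'cV[R]_n.
Hypothesis hz0 : subdiff f xhat z0.

Lemma step_lemma i xs x xs' x' :
  has_grad (conj_fun f) xs x -> has_grad (conj_fun f) xs' x' ->
  alg_step f A b I inC i xs x xs' ->
  [/\ bregman f xs' x' xhat + alpha / 2 * norm2 (x' - x) ^+ 2
        <= bregman f xs x xhat,
      dotv (sel (I i) *m (A *m x - b)) (sel (I i) *m (A *m x - b))
        <= fro2 (subrows A (I i)) * norm2 (x' - x) ^+ 2 &
      (exists u, xs' = xs - A^T *m u)].
Proof.
move=> hg hg' hst.
have sd := @grad_subdiff _ _ f alpha hsc xhat z0 hz0 _ _ hg.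
have hD := @breg_ge _ _ f alpha x xs x' hsc sd.
have hdiff := breg_diff f xs x xs' x' xhat.
set Ai := subrows A (I i) in hst *.
set bi := subvec b (I i) in hst.
have eAi : Ai = sel (I i) *m A by rewrite /Ai subrowsE.
have ebi : bi = sel (I i) *m b by rewrite /bi subvecE.
have eri : sel (I i) *m (A *m x - b) = Ai *m x - bi.
  by rewrite eAi ebi mulmxBr mulmxA.
have hAi : Ai *m xhat = bi by rewrite eAi ebi -mulmxA hAx.
have eAT : forall u : 'cV[R]_#|I i|, Ai^T *m u = A^T *m ((sel (I i))^T *m u).
  by move=> u; rewrite eAi trmx_mul mulmxA.
rewrite eri.
move: hst; rewrite /alg_step -/Ai -/bi.
case: (inC i) => /=.
  move=> [wh [hmin exs']].
  have hopt : forall e, dotv x' (- (Ai^T *m e)) + dotv e bi = 0.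
    move=> e; apply: (grad_opt _ _ _ _ _ hg') => t.
    have := hmin (wh + t *: e).
    rewrite mulmxDr -scalemxAr dotvDl dotvZl -exs' opprD addrA.
    move=> H; rewrite exs' scalerN; rewrite exs' !addrA in H *; lra.
  have hx' : Ai *m x' = bi.
    have := hopt (bi - Ai *m x').
    rewrite dotvNr -dotv_mulmx (dotvC (Ai *m x')) => H.
    have E := dotvBr bi (Ai *m x') (bi - Ai *m x').
    have : dotv (bi - Ai *m x') (bi - Ai *m x') = 0 by lra.
    move/dotv_eq0.
    by move/eqP; rewrite subr_eq0 => /eqP.
  have h0 : dotv (xs' - xs) (xhat - x') = 0.
    rewrite exs' addrC addKr dotvNl dotvC -dotv_mulmx.
    by rewrite mulmxBr hAi hx' subrr dotv0l oppr0.
  split.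
  - rewrite h0 addr0 in hdiff; lra.
  - have -> : Ai *m x - bi = Ai *m (x - x') by rewrite mulmxBr hx'.
    by rewrite -norm2_sq -(norm2N (x' - x)) opprB; apply: norm2_mulmx_sq.
  - by exists ((sel (I i))^T *m wh); rewrite exs' eAT.
set w := Ai *m x - bi.
case: eqP => [w0 exs'|/eqP w0].
  have h0 : dotv (xs' - xs) (xhat - x') = 0 by rewrite exs' subrr dotv0l.
  split.
  - rewrite h0 addr0 in hdiff; lra.
  - by rewrite w0 dotv0l mulr_ge0 // ?fro2_ge0 // sqr_ge0.
  - by exists 0; rewrite mulmx0 subr0.
move=> [t [hmin exs']].
set v := Ai^T *m w in hmin exs'.
set beta := dotv v x - norm2 w ^+ 2 in hmin.
have hopt : dotv x' (- v) + beta = 0.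
  apply: (grad_opt _ _ _ _ _ hg') => t'.
  have := hmin (t + t').
  rewrite scalerDl opprD addrA -exs' mulrDl.
  rewrite -scalerN.
  lra.
have ebeta : beta = dotv bi w.
  rewrite /beta norm2_sq /v dotvC -dotv_mulmx /w.
  rewrite dotvBl; lra.
have evx : dotv v xhat = dotv bi w.
  by rewrite dotvC /v -dotv_mulmx hAi.
have h0 : dotv (xs' - xs) (xhat - x') = 0.
  rewrite exs' addrC addKr dotvNl dotvZl dotvBr evx.
  rewrite dotvNr in hopt; rewrite (dotvC v x').
  have -> : dotv bi w - dotv x' v = 0 by lra.
  by rewrite mulr0 oppr0.
split.
- rewrite h0 addr0 in hdiff; lra.
- have eW : dotv w w = dotv v (x - x').
    rewrite dotvBr (dotvC v x'); rewrite dotvNr in hopt.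
    have := norm2_sq w; rewrite /beta in hopt; lra.
  have hv : norm2 v ^+ 2 <= fro2 Ai * dotv w w.
    by rewrite -norm2_sq -(fro2_tr Ai); exact: norm2_mulmx_sq.
  have hcs := CS v (x - x'); rewrite -eW in hcs.
  rewrite -(norm2N (x' - x)) opprB.
  set W := dotv w w in hv hcs *; set N := norm2 v in hv hcs.
  set E := norm2 (x - x') in hcs *.
  have W0 : 0 <= W := dotv_ge0 w.
  have N0 : 0 <= N := norm2_ge0 _.
  have E0 : 0 <= E := norm2_ge0 _.
  have F0 : 0 <= fro2 Ai := fro2_ge0 _.
  have h1 : W ^+ 2 <= N ^+ 2 * E ^+ 2.
    have := mulr_ge0 N0 E0; nra.
  have h2 : N ^+ 2 * E ^+ 2 <= fro2 Ai * W * E ^+ 2.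
    by apply: ler_wpM2r => //; apply: sqr_ge0.
  have [Wz|Wp] := eqVneq W 0.
    by rewrite Wz mulr_ge0 // sqr_ge0.
  have Wpos : 0 < W by rewrite lt_def Wp W0.
  have : W * W <= W * (fro2 Ai * E ^+ 2).
    have := le_trans h1 h2; rewrite expr2 => H; apply: (le_trans H); lra.
  by rewrite ler_pM2l.
- by exists ((sel (I i))^T *m (t *: w)); rewrite exs' /v scalemxAr eAT.
Qed.

End Step.


Section Dist.
Context {R : realType} {n : nat}.
Implicit Types (v y : 'cV[R]_n) (D : set 'cV[R]_n).

Lemma dist_le v D y : D y -> dist_set v D <= norm2 (v - y).
Proof.
move=> Dy; apply: (ge_inf (E := [set r | exists y, D y /\ r = norm2 (v - y)])).
  by exists 0 => r [y' [_ ->]]; apply: norm2_ge0.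
by exists y.
Qed.

Lemma dist_lb v D a : D !=set0 -> (forall y, D y -> a <= norm2 (v - y)) ->
  a <= dist_set v D.
Proof.
move=> [y Dy] H; apply: lb_le_inf.
  by exists (norm2 (v - y)); exists y.
by move=> r [y' [Dy' ->]]; apply: H.
Qed.

Lemma dist_ge0 v D : D !=set0 -> 0 <= dist_set v D.
Proof. by move=> ne; apply: dist_lb => // y _; apply: norm2_ge0. Qed.

Lemma dist_mem v D : D v -> dist_set v D = 0.
Proof.
move=> Dv; apply/eqP; rewrite eq_le dist_ge0 ?andbT; last by exists v.
by have := @dist_le v D v Dv; rewrite subrr norm2_0.
Qed.

Lemma dist_lin v D a c : D !=set0 -> 0 <= c ->
  (forall y, D y -> a <= c * norm2 (v - y)) -> a <= c * dist_set v D.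
Proof.
move=> ne c0 H; have [c00|cp] := eqVneq c 0.
  by case: ne => y Dy; move: (H y Dy); rewrite c00 !mul0r.
have cpos : 0 < c by rewrite lt_def cp c0.
rewrite -ler_pdivrMl //; apply: dist_lb => // y Dy.
by rewrite ler_pdivrMl // H.
Qed.

End Dist.

Lemma dotv_ee {R : realType} {n : nat} (u : 'cV[R]_n) j : dotv u (ee j) = u j 0.
Proof.
rewrite /dotv (bigD1 j) //= big1 ?addr0; first by rewrite mxE !eqxx mulr1.
by move=> k /negPf hk; rewrite mxE hk mulr0.
Qed.

Lemma dotv_sub_le {R : realType} {n : nat} (a b : 'cV[R]_n) :
  dotv (a - b) (a - b) <= 2 * dotv a a + 2 * dotv b b.
Proof.
have := dotv_ge0 (a + b).
rewrite !dotvBl !dotvBr !dotvDl !dotvDr (dotvC b a); lra.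
Qed.

Lemma pinv_range {R : realType} {m n : nat} (A : 'M[R]_(m, n)) (u : 'cV[R]_n) :
  mrange A^T u -> A^T *m ((pinvmx A)^T *m u) = u.
Proof.
move=> [y ->].
have h : ((A^T *m y)^T <= A)%MS by rewrite trmx_mul trmxK submxMl.
have := mulmxKpV h.
move/(congr1 trmx); rewrite !trmx_mul !trmxK => ->.
by [].
Qed.

Section ErrB.
Context {R : realType} {m n : nat} (A : 'M[R]_(m, n)) (b : 'cV[R]_m)
  (alpha : R) (f : 'cV[R]_n -> R) (xhat : 'cV[R]_n).
Hypothesis hsc : strongly_convex alpha f.
Hypothesis hAx : A *m xhat = b.
Hypothesis hcalm : calm (subdiff f) xhat.
Hypothesis hreg : lin_regular (subdiff f xhat) (mrange A^T).
Variable z0 : 'cV[R]_n.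
Hypothesis hz0S : subdiff f xhat z0.

Let a0 : 0 < alpha. Proof. by case: hsc. Qed.

Variable gam : R.
Hypothesis gam0 : 0 < gam.
Hypothesis hST : (subdiff f xhat `&` mrange A^T) !=set0.
Hypothesis hgam : forall v, dist_set v (subdiff f xhat `&` mrange A^T) ^+ 2 <=
  gam * (dist_set v (subdiff f xhat) ^+ 2 + dist_set v (mrange A^T) ^+ 2).

Lemma key_ineq xs x z :
  has_grad (conj_fun f) xs x -> mrange A^T xs -> subdiff f xhat z ->
  (bregman f xs x xhat) ^+ 2 <=
    fro2 (pinvmx A)^T * gam * dotv (A *m x - b) (A *m x - b) * norm2 (xs - z) ^+ 2.
Proof.
move=> hg hT hz.
have sd := @grad_subdiff _ _ f alpha hsc xhat z0 hz0S _ _ hg.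
have hD := @breg_ge _ _ f alpha x xs xhat hsc sd.
set h := bregman f xs x xhat in hD *.
have h0 : 0 <= h.
  apply: le_trans hD; apply: mulr_ge0; last exact: sqr_ge0.
  by apply: divr_ge0 => //; apply: ltW.
set Q := (pinvmx A)^T.
set kap := Num.sqrt (fro2 Q).
have kap0 : 0 <= kap := sqrtr_ge0 _.
have kap2 : kap ^+ 2 = fro2 Q by rewrite sqr_sqrtr // fro2_ge0.
set rr := norm2 (A *m x - b).
have rr0 : 0 <= rr := norm2_ge0 _.
have rr2 : rr ^+ 2 = dotv (A *m x - b) (A *m x - b) by rewrite norm2_sq.
have step1 : forall y, (subdiff f xhat `&` mrange A^T) y -> h <= kap * rr * norm2 (xs - y).
  move=> y [Sy Ty].
  have e1 : h <= dotv (y - xs) (xhat - x).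
    have := Sy x; rewrite /h /bregman !dotvBl !dotvBr; lra.
  have Tyx : mrange A^T (y - xs).
    by case: Ty => y1 ->; case: hT => y2 ->; exists (y1 - y2); rewrite mulmxBr.
  have ew := pinv_range _ _ Tyx; rewrite -/Q in ew.
  set w := Q *m (y - xs) in ew.
  rewrite -ew dotvC -dotv_mulmx mulmxBr hAx in e1.
  have e2 := CS (b - A *m x) w.
  have enr : norm2 (b - A *m x) = rr by rewrite -opprB norm2N.
  rewrite enr in e2.
  have e3 : norm2 w ^+ 2 <= (kap * norm2 (xs - y)) ^+ 2.
    rewrite exprMn kap2 -(norm2N (xs - y)) opprB; exact: norm2_mulmx_sq.
  have e4 : norm2 w <= kap * norm2 (xs - y).
    have := norm2_ge0 w; have := mulr_ge0 kap0 (norm2_ge0 (xs - y)); nra.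
  have e5 : rr * norm2 w <= rr * (kap * norm2 (xs - y)) by apply: ler_wpM2l.
  lra.
have step2 : h <= kap * rr * dist_set xs (subdiff f xhat `&` mrange A^T).
  by apply: dist_lin => //; apply: mulr_ge0.
have dT : dist_set xs (mrange A^T) = 0 by apply: dist_mem.
have step3 := hgam xs; rewrite dT expr0n addr0 /= in step3.
have dS0 : 0 <= dist_set xs (subdiff f xhat) by apply: dist_ge0; exists z.
have dS : dist_set xs (subdiff f xhat) <= norm2 (xs - z) by apply: dist_le.
have dST0 : 0 <= dist_set xs (subdiff f xhat `&` mrange A^T) by apply: dist_ge0.
set d1 := dist_set xs (subdiff f xhat `&` mrange A^T) in step2 step3 dST0.
set d2 := dist_set xs (subdiff f xhat) in step3 dS0 dS.
set N := norm2 (xs - z) in dS *.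
have kr0 : 0 <= kap * rr by apply: mulr_ge0.
have s1 : h ^+ 2 <= (kap * rr) ^+ 2 * d1 ^+ 2.
  rewrite -exprMn; have := mulr_ge0 kr0 dST0; nra.
have s2 : d2 ^+ 2 <= N ^+ 2 by nra.
have s3 : (kap * rr) ^+ 2 * d1 ^+ 2 <= (kap * rr) ^+ 2 * (gam * N ^+ 2).
  apply: ler_wpM2l; first exact: sqr_ge0.
  apply: (le_trans step3); apply: ler_wpM2l => //; exact: ltW.
rewrite exprMn kap2 rr2 in s3.
apply: (le_trans s1); rewrite exprMn kap2 rr2; apply: (le_trans s3).
by rewrite le_eqVlt; apply/orP; left; apply/eqP; ring.
Qed.

Lemma Kb_term j : `|f (xhat + ee j) - f xhat| + `|f (xhat - ee j) - f xhat| <= Kb f xhat.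
Proof.
rewrite /Kb (bigD1 j) //= lerDl; apply: sumr_ge0 => i _; apply: addr_ge0 => //.
Qed.

Lemma coord_bound xs x j : has_grad (conj_fun f) xs x ->
  `|xs j 0| <= bregman f xs x xhat + Kb f xhat.
Proof.
move=> hg.
have fe := @fenchel_eq _ _ f alpha hsc xhat z0 hz0S _ _ hg.
have c1 := @conj_ge _ _ f alpha hsc xhat z0 hz0S xs (xhat + ee j).
have c2 := @conj_ge _ _ f alpha hsc xhat z0 hz0S xs (xhat - ee j).
rewrite dotvDr dotv_ee in c1; rewrite dotvBr dotv_ee in c2.
have kt := Kb_term j.
have a1 := ler_norm (f (xhat + ee j) - f xhat).
have a2 := ler_norm (f (xhat - ee j) - f xhat).
have a3 := normr_ge0 (f (xhat + ee j) - f xhat).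
have a4 := normr_ge0 (f (xhat - ee j) - f xhat).
rewrite /bregman dotvBr.
rewrite ler_norml; apply/andP; split; lra.
Qed.

Lemma err_bound D0 : exists C, 0 < C /\ forall xs x,
  has_grad (conj_fun f) xs x -> mrange A^T xs -> bregman f xs x xhat <= D0 ->
  bregman f xs x xhat <= C * dotv (A *m x - b) (A *m x - b).
Proof.
case: hcalm => _ [eps [L [eps0 [L0 hcf]]]].
set Phi := fro2 (pinvmx A)^T.
have Phi0 : 0 <= Phi := fro2_ge0 _.
set K := Kb f xhat.
set M := 2 * (n%:R * (D0 + K) ^+ 2) + 2 * dotv z0 z0.
have M0 : 0 <= M.
  apply: addr_ge0; apply: mulr_ge0 => //; last exact: dotv_ge0.
  by apply: mulr_ge0 => //; apply: sqr_ge0.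
set del := alpha / 2 * eps ^+ 2.
have del0 : 0 < del by apply: mulr_gt0; [apply: divr_gt0|apply: exprn_gt0].
set C1 := 2 * Phi * gam * L ^+ 2 / alpha.
set C2 := Phi * gam * M / del.
have C10 : 0 <= C1.
  apply: divr_ge0; last exact: ltW.
  by apply: mulr_ge0; [apply: mulr_ge0; [apply: mulr_ge0|apply: ltW]|apply: sqr_ge0].
have C20 : 0 <= C2.
  by apply: divr_ge0; [apply: mulr_ge0 => //; apply: mulr_ge0 => //; apply: ltW|apply: ltW].
exists (C1 + C2 + 1); split; first by lra.
move=> xs x hg hT hD0.
have sd := @grad_subdiff _ _ f alpha hsc xhat z0 hz0S _ _ hg.
have hD := @breg_ge _ _ f alpha x xs xhat hsc sd.
set h := bregman f xs x xhat in hD hD0 *.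
set r2 := dotv (A *m x - b) (A *m x - b).
have r20 : 0 <= r2 := dotv_ge0 _.
have ed : norm2 (xhat - x) = norm2 (x - xhat) by rewrite -norm2N opprB.
rewrite ed in hD.
set d := norm2 (x - xhat) in hD.
have d0 : 0 <= d := norm2_ge0 _.
have h0 : 0 <= h.
  apply: le_trans hD; apply: mulr_ge0; last exact: sqr_ge0.
  by apply: divr_ge0 => //; apply: ltW.
suff : h <= C1 * r2 \/ h <= C2 * r2.
  have := mulr_ge0 C10 r20; have := mulr_ge0 C20 r20; lra.
have [hde|hde] := lerP d eps.
  left.
  have [z [u [Sz [nu exs]]]] := hcf x hde xs sd.
  have kq := key_ineq _ _ _ hg hT Sz.
  rewrite -/h -/r2 -/Phi in kq.
  have eN : norm2 (xs - z) = L * d * norm2 u.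
    by rewrite exs addrC addKr norm2Z ger0_norm // mulr_ge0 // ltW.
  have eN2 : norm2 (xs - z) ^+ 2 <= (L * d) ^+ 2.
    rewrite eN exprMn; rewrite -[X in _ <= X]mulr1; apply: ler_wpM2l; first exact: sqr_ge0.
    have := norm2_ge0 u; nra.
  have k2 : h ^+ 2 <= Phi * gam * r2 * (L * d) ^+ 2.
    apply: (le_trans kq); apply: ler_wpM2l => //.
    by apply: mulr_ge0 => //; apply: mulr_ge0 => //; apply: ltW.
  have dd : d ^+ 2 <= 2 / alpha * h.
    have -> : 2 / alpha * h = (2 * h) / alpha by rewrite mulrAC.
    rewrite ler_pdivlMr //; lra.
  have k3 : h ^+ 2 <= Phi * gam * r2 * L ^+ 2 * (2 / alpha * h).
    apply: (le_trans k2); rewrite exprMn mulrA; apply: ler_wpM2l => //.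
    apply: mulr_ge0; last exact: sqr_ge0.
    by apply: mulr_ge0 => //; apply: mulr_ge0 => //; apply: ltW.
  have [hz|hp] := eqVneq h 0.
    by rewrite hz; apply: mulr_ge0.
  have hpos : 0 < h by rewrite lt_def hp h0.
  have : h * h <= h * (C1 * r2).
    rewrite -expr2; apply: (le_trans k3); rewrite /C1 le_eqVlt; apply/orP; left.
    apply/eqP; field; exact: lt0r_neq0.
  by rewrite ler_pM2l.
right.
have kq := key_ineq _ _ _ hg hT hz0S.
rewrite -/h -/r2 -/Phi in kq.
have nM : norm2 (xs - z0) ^+ 2 <= M.
  rewrite norm2_sq; apply: (le_trans (dotv_sub_le _ _)).
  rewrite /M lerD2r ler_pM2l //.
  have -> : n%:R * (D0 + K) ^+ 2 = \sum_(j < n) (D0 + K) ^+ 2 by rewrite sumr_const card_ord mulr_natl.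
  rewrite /dotv; apply: ler_sum => j _.
  have cb := coord_bound _ _ j hg; rewrite -/h -/K in cb.
  have := normr_ge0 (xs j 0); rewrite -expr2 -real_normK ?num_real //.
  have := Kb_ge0 f xhat; rewrite -/K => K0 n0.
  nra.
have k2 : h ^+ 2 <= Phi * gam * r2 * M.
  apply: (le_trans kq); apply: ler_wpM2l => //.
  by apply: mulr_ge0 => //; apply: mulr_ge0 => //; apply: ltW.
have hdel : del <= h.
  apply: le_trans hD; rewrite /del ler_wpM2l //; first by apply: divr_ge0 => //; apply: ltW.
  have := ltW hde; have := ltW eps0; nra.
have hpos : 0 < h by apply: lt_le_trans hdel.
have : h * del <= h * h.
  by rewrite ler_pM2l.
rewrite -expr2 => H.
have := le_trans H k2.
rewrite /C2 -ler_pdivlMr // => H2.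
by apply: (le_trans H2); rewrite le_eqVlt; apply/orP; left; apply/eqP; field; apply: lt0r_neq0.
Qed.

End ErrB.


Theorem theorem4p5 (R : realType) (m n r : nat)
  (A : 'M[R]_(m, n)) (b : 'cV[R]_m) (alpha : R) (f : 'cV[R]_n -> R)
  (xhat : 'cV[R]_n)
  (I : 'I_r -> {set 'I_m}) (inC : 'I_r -> bool) (p : 'I_r -> R)
  (xs xss : seq 'I_r -> 'cV[R]_n) :
  mrange A b ->
  strongly_convex alpha f ->
  A *m xhat = b ->
  (forall x, A *m x = b -> f xhat <= f x) ->
  calm (subdiff f) xhat ->
  lin_regular (subdiff f xhat) (mrange A^T) ->
  (forall j : 'I_m, exists i : 'I_r, j \in I i) ->
  (forall i, 0 < p i) -> \sum_(i < r) p i = 1 ->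
  mrange A^T (xss [::]) ->
  (forall s, has_grad (conj_fun f) (xss s) (xs s)) ->
  (forall s i, alg_step f A b I inC i (xss s) (xs s) (xss (rcons s i))) ->
  exists q c : R, 0 < q < 1 /\ 0 < c /\
    forall k : nat,
      expect p k.+1 (fun s => bregman f (xss s) (xs s) xhat)
        <= q * expect p k (fun s => bregman f (xss s) (xs s) xhat) /\
      expect p k (fun s => norm2 (xs s - xhat)) <= c * Num.sqrt q ^+ k.
Proof.
move=> _ hsc hAx _ hcalm hreg hcov hp hpsum hx0 hgrad hstep.
have a0 : 0 < alpha by case: hsc.
case: (hreg) => hST [gam [gam0 hgam]].
have [z0 [hz0S _]] := hST.
set h := fun s => bregman f (xss s) (xs s) xhat.
have hst := fun s i => step_lemma A b alpha f xhat I inC hsc hAx z0 hz0S i _ _ _ _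
  (hgrad s) (hgrad (rcons s i)) (hstep s i).
have hrange : forall s, mrange A^T (xss s).
  elim/last_ind => [|s i IH] //.
  have [_ _ [u ->]] := hst s i.
  case: IH => y ->; exists (y - u); by rewrite mulmxBr.
have hmono : forall s, h s <= h [::].
  elim/last_ind => [|s i IH] //.
  have [H1 _ _] := hst s i.
  apply: le_trans IH; apply: le_trans H1; rewrite lerDl mulr_ge0 //.
    by apply: divr_ge0 => //; apply: ltW.
  exact: sqr_ge0.
have hge0 : forall s, 0 <= h s.
  move=> s; have sd := @grad_subdiff _ _ f alpha hsc xhat z0 hz0S _ _ (hgrad s).
  have hD := @breg_ge _ _ f alpha (xs s) (xss s) xhat hsc sd.
  apply: le_trans hD; apply: mulr_ge0; last exact: sqr_ge0.
  by apply: divr_ge0 => //; apply: ltW.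
set h0 := h [::].
have [C [C0 hC]] := err_bound A b alpha f xhat hsc hAx hcalm z0 hz0S gam gam0 hST hgam h0.
set K := 1 + \sum_i fro2 (subrows A (I i)).
have hK : forall i, fro2 (subrows A (I i)) <= K.
  move=> i; rewrite /K (bigD1 i) //= addrCA lerDl addr_ge0 //.
  by apply: sumr_ge0 => j _; apply: fro2_ge0.
have K0 : 0 < K by rewrite /K ltr_wpDr // sumr_ge0 // => j _; apply: fro2_ge0.
set c := alpha / (2 * K).
have c0 : 0 < c by rewrite divr_gt0 // mulr_gt0.
set pmin := \big[Order.min/1]_i p i.
have pmin0 : 0 < pmin.
  rewrite /pmin; elim/big_ind: _ => //; first by move=> x y hx hy; rewrite lt_min hx hy.
have hpmin : forall i, pmin <= p i by move=> i; apply: bigmin_le.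
set C' := C + c * pmin.
have cp0 : 0 < c * pmin by apply: mulr_gt0.
have C'0 : 0 < C' by rewrite /C' addr_gt0.
set q := 1 - c * pmin / C'.
have q0 : 0 < q.
  rewrite /q subr_gt0 ltr_pdivrMr // mul1r /C' ltrDr //.
have q1 : q < 1.
  by rewrite /q ltrBlDr ltrDl divr_gt0.
have hdec : forall s, \sum_i p i * h (rcons s i) <= q * h s.
  move=> s.
  set ri := fun i => dotv (sel (I i) *m (A *m xs s - b)) (sel (I i) *m (A *m xs s - b)).
  have h1 : forall i, h (rcons s i) <= h s - c * ri i.
    move=> i; have [H1 H2 _] := hst s i.
    rewrite -/(h (rcons s i)) -/(h s) -/(ri i) in H1 H2.
    set E := norm2 (xs (rcons s i) - xs s) ^+ 2 in H1 H2.
    have E0 : 0 <= E by apply: sqr_ge0.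
    have : ri i <= K * E.
      apply: (le_trans H2); apply: ler_wpM2r => //.
    move=> H3.
    have : c * ri i <= alpha / 2 * E.
      have : c * ri i <= c * (K * E) by apply: ler_wpM2l => //; apply: ltW.
      move=> H4; apply: (le_trans H4); rewrite /c le_eqVlt; apply/orP; left.
      apply/eqP; field; exact: lt0r_neq0.
    lra.
  have h2 : \sum_i p i * h (rcons s i) <= h s - c * \sum_i p i * ri i.
    have -> : h s - c * \sum_i p i * ri i = \sum_i p i * (h s - c * ri i).
      rewrite -[h s in LHS]mul1r -hpsum mulr_suml mulr_sumr -sumrB.
      by apply: eq_bigr => i _; ring.
    by apply: ler_sum => i _; apply: ler_wpM2l; [apply: ltW|apply: h1].
  have h3 : pmin * \sum_i ri i <= \sum_i p i * ri i.
    rewrite mulr_sumr; apply: ler_sum => i _; apply: ler_wpM2r => //.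
    exact: dotv_ge0.
  have h4 : dotv (A *m xs s - b) (A *m xs s - b) <= \sum_i ri i.
    exact: cover_ineq.
  have h5 : h s <= C' * dotv (A *m xs s - b) (A *m xs s - b).
    apply: (le_trans (hC _ _ (hgrad s) (hrange s) (hmono s))).
    apply: ler_wpM2r; first exact: dotv_ge0.
    by rewrite /C' lerDl ltW.
  set r2 := dotv (A *m xs s - b) (A *m xs s - b) in h4 h5.
  set SR := \sum_i ri i in h3 h4.
  set SP := \sum_i p i * ri i in h2 h3.
  have : c * pmin * SR <= c * SP.
    by rewrite -mulrA; apply: ler_wpM2l => //; apply: ltW.
  have : h s / C' <= SR.
    by rewrite ler_pdivrMr // mulrC; apply: (le_trans h5); apply: ler_wpM2l => //; apply: ltW.
  move=> H6 H7.
  have : c * pmin * (h s / C') <= c * pmin * SR by apply: ler_wpM2l => //; apply: ltW.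
  have -> : c * pmin * (h s / C') = (c * pmin / C') * h s by rewrite mulrA mulrAC.
  rewrite /q mulrBl mul1r; lra.
have pge0 : forall i, 0 <= p i by move=> i; apply: ltW.
have hE : forall k, expect p k.+1 h <= q * expect p k h.
  move=> k; rewrite expect_succ.
  have H := expect_le p pge0 k (fun s => \sum_i p i * h (rcons s i)) (fun s => q * h s + 0).
  rewrite (expect_lin p hpsum) addr0 in H; apply: H => s.
  by rewrite addr0; apply: hdec.
have hEk : forall k, expect p k h <= q ^+ k * h0.
  elim => [|k IH]; first by rewrite expect0 expr0 mul1r.
  apply: (le_trans (hE k)); rewrite exprS -mulrA; apply: ler_wpM2l => //; exact: ltW.
have h00 : 0 <= h0 := hge0 [::].
exists q, (h0 / alpha + 2^-1); split; first by rewrite q0 q1.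
split; first by apply: ltr_wpDl; [apply: divr_ge0 => //; apply: ltW|rewrite invr_gt0].
move=> k; split; first exact: hE.
set tau := Num.sqrt q ^+ k.
have tau0 : 0 < tau by rewrite exprn_gt0 // sqrtr_gt0.
have tau2 : tau ^+ 2 = q ^+ k by rewrite /tau -exprM mulnC exprM sqr_sqrtr // ltW.
have hpt : forall s, norm2 (xs s - xhat) <= (alpha * tau)^-1 * h s + tau / 2.
  move=> s.
  have sd := @grad_subdiff _ _ f alpha hsc xhat z0 hz0S _ _ (hgrad s).
  have hD := @breg_ge _ _ f alpha (xs s) (xss s) xhat hsc sd.
  rewrite -(norm2N (xhat - xs s)) opprB -/(h s) in hD.
  set d := norm2 (xs s - xhat) in hD *.
  have d0 : 0 <= d := norm2_ge0 _.
  have at0 : 0 < alpha * tau by apply: mulr_gt0.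
  have -> : (alpha * tau)^-1 * h s + tau / 2 = (2 * h s + alpha * tau ^+ 2) / (2 * (alpha * tau)).
    by field; rewrite !lt0r_neq0.
  rewrite ler_pdivlMr ?mulr_gt0 //.
  have sq : 0 <= (d - tau) ^+ 2 := sqr_ge0 _.
  have : alpha * (2 * d * tau) <= alpha * (d ^+ 2 + tau ^+ 2).
    by apply: ler_wpM2l; [apply: ltW|nra].
  nra.
apply: (le_trans (expect_le p pge0 _ _ (fun s => (alpha * tau)^-1 * h s + tau / 2) hpt)).
rewrite (expect_lin p hpsum).
have ai0 : 0 <= (alpha * tau)^-1 by rewrite invr_ge0 ltW // mulr_gt0.
have : (alpha * tau)^-1 * expect p k h <= (alpha * tau)^-1 * (q ^+ k * h0).
  by apply: ler_wpM2l.
have -> : (alpha * tau)^-1 * (q ^+ k * h0) = h0 / alpha * tau.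
  by rewrite -tau2; field; rewrite !lt0r_neq0.
move=> H; lra.
Qed.
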